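(* Assume the setting and assumptions (A1)–(A5) described in the context, so that the closure of $A$ generates a conservative Markov semigroup $\{T(t)\}_{t\ge0}$ in $C(\bar L)$, and assume additionally that $\iota_n(M_n)$ converges weakly to a probability measure $P$ on $\bar L$. Let $X(t)$ be the Markov process in $\bar L$ with transition semigroup $\{T(t)\}$ and initial distribution $P$ (which is stationary), and for each $n$ let $(\lambda_n(k))_{k=0,1,2,\dots}$ be the stationary Markov chain on $L_n$ with transition matrix $T_n$ and initial distribution $M_n$. Then the finite-dimensional distributions of the chains converge to those of $X$ under the time scaling in which one step corresponds to time $\varepsilon_n$: for any $0\le t_1<\dots<t_k$ and $f_1,\dots,f_k\in C(\bar L)$, $$\lim_{n\to\infty}\mathbb E\Big[\prod_{i=1}^k f_i\big(\iota_n(\lambda_n([\varepsilon_n^{-1}t_i]))\big)\Big]=\mathbb E\Big[\prod_{i=1}^kf_i(X(t_i))\Big].$$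
   Context: $L=\bigsqcup_{n\ge0}L_n$ is a graded set with $L_0$ a singleton and each $L_n$ finite; $p^\downarrow:L\times L\to[0,\infty)$ vanishes unless $|\lambda|=|\mu|+1$ and $\sum_{\mu\in L_{|\lambda|-1}}p^\downarrow(\lambda,\mu)=1$ for $|\lambda|\ge1$. $\{M_n\}$ is a coherent system (probability measures on $L_n$ with $\sum_{\lambda\in L_n}M_n(\lambda)p^\downarrow(\lambda,\mu)=M_{n-1}(\mu)$) with $M_n(\lambda)>0$ everywhere; $p^\uparrow(\lambda,\nu)=\frac{M_{n+1}(\nu)}{M_n(\lambda)}p^\downarrow(\nu,\lambda)$; $T_n(\lambda,\tilde\lambda)=\sum_{\nu\in L_{n+1}}p^\uparrow(\lambda,\nu)p^\downarrow(\nu,\tilde\lambda)$, acting on real functions on $L_n$ (norm $\|g\|_n=\sup|g|$) by $(T_ng)(\lambda)=\sum_{\tilde\lambda}T_n(\lambda,\tilde\lambda)g(\tilde\lambda)$. $\bar L$ is a topological space, $\iota_n:L_n\to\bar L$ injective, $\pi_n:C(\bar L)\to C(L_n)$, $(\pi_nf)(\lambda)=f(\iota_n(\lambda))$. Assumptions: (A1) $\bar L$ compact metrizable separable; (A2) every nonempty open set meets $\iota_n(L_n)$ for all large $n$; (A3) there is a dense subspace $\mathcal F\subset C(\bar L)$ with an exhaustive ascending sequence of finite-dimensional subspaces $\mathcal F^m$ such that for each $m$ and all large $n$, $\pi_n$ is injective on $\mathcal F^m$ and $\pi_n(\mathcal F^m)$ is $T_n$-invariant; (A4) there are $\varepsilon_n>0$,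 $\varepsilon_n\to0$, such that for $f\in\mathcal F^m$ the elements $g_n\in\mathcal F^m$ with $\pi_n(g_n)=\varepsilon_n^{-1}(T_n-\mathbf 1)\pi_n f$ converge in $\mathcal F^m$ to a limit $Af$; (A5) $1\in\mathcal F$. *)

(* Defs.v *)
From HB Require Import structures.
From mathcomp Require Import all_boot all_order all_algebra.
From mathcomp Require Import all_classical all_reals all_analysis.
Unset Printing Implicit Defensive.
Import Order.TTheory GRing.Theory Num.Theory.
Import numFieldNormedType.Exports.
Local Open Scope classical_set_scope.
Local Open Scope ring_scope.

Section Defs.
Variable R : realType.

Variable L : nat -> finType.

Definition pup (pd : forall n, L n.+1 -> L n -> R) (M : forall n, L n -> R)
  (n : nat) (lam : L n) (nu : L n.+1) : R :=
  M n.+1 nu / M n lam * pd n nu lam.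

Definition Tker pd M (n : nat) (lam lam' : L n) : R :=
  \sum_(nu : L n.+1) pup pd M n lam nu * pd n nu lam'.

Definition Top pd M (n : nat) (g : L n -> R) : L n -> R :=
  fun lam => \sum_(lam' : L n) Tker pd M n lam lam' * g lam'.

Variable Lb : pseudoPMetricType R.

Definition pi_n (iota : forall n, L n -> Lb) (n : nat) (f : Lb -> R) : L n -> R :=
  fun lam => f (iota n lam).

Definition ucvg {I : Type} (F : set_system I) (g : I -> Lb -> R) (f : Lb -> R) :=
  forall e : R, 0 < e -> \forall i \near F, forall x, `|g i x - f x| < e.

Definition span_of (d : nat) (b : 'I_d -> Lb -> R) : set (Lb -> R) :=
  [set f | exists c : 'I_d -> R, forall x, f x = \sum_(i < d) c i * b i x].

Definition fin_dim_subspace (S : set (Lb -> R)) :=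
  exists d (b : 'I_d -> Lb -> R), (forall i, continuous (b i)) /\ S = span_of d b.

(* For the chain: given steps a_1 <= ... <= a_k and f_1..f_k,
   E[Π f_i(ι_n(λ(a_i)))] = Σ_λ M_n(λ) (chain_fdd n 0 [(a_i,f_i)]) (λ) where
   chain_fdd prev ((a,f)::l) = T_n^{a-prev} ( (f∘ι_n) · chain_fdd a l ). *)
Fixpoint chain_fdd pd M (iota : forall n, L n -> Lb) (n : nat) (prev : nat)
  (l : seq (nat * (Lb -> R))) : L n -> R :=
  match l with
  | [::] => fun _ => 1
  | (a, f) :: l' =>
      iter (a - prev)%N (Top pd M n)
        (fun lam => f (iota n lam) * chain_fdd pd M iota n a l' lam)
  end.

(* For the Markov process with semigroup T(t):
   E[Π f_i(X(t_i))] = ∫ (semi_fdd 0 [(t_i,f_i)]) dP where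
   semi_fdd prev ((t,f)::l) = T(t-prev) ( f · semi_fdd t l ). *)
Fixpoint semi_fdd (Tt : R -> (Lb -> R) -> (Lb -> R)) (prev : R)
  (l : seq (R * (Lb -> R))) : Lb -> R :=
  match l with
  | [::] => fun _ => 1
  | (t, f) :: l' => Tt (t - prev) (fun x => f x * semi_fdd Tt t l' x)
  end.

(* The closure of A (defined on F = ∪ F^m) is the generator of T(t):
   for f,h ∈ C(Lb): (T(t)f - f)/t -> h uniformly as t -> 0+ iff (f,h) lies in
   the closure of the graph of A|_F in C(Lb) x C(Lb). *)
Definition generated_by_closure (Tt : R -> (Lb -> R) -> (Lb -> R))
  (F : set (Lb -> R)) (A : (Lb -> R) -> (Lb -> R)) :=
  forall f h : Lb -> R, continuous f -> continuous h ->
    (ucvg (0^'+) (fun t x => (Tt t f x - f x) / t) h <->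
     exists fk : nat -> Lb -> R, (forall k, F (fk k)) /\
       ucvg \oo fk f /\ ucvg \oo (fun k => A (fk k)) h).

Definition markov_semigroup (Tt : R -> (Lb -> R) -> (Lb -> R)) :=
  (forall t (f : Lb -> R), 0 <= t -> continuous f -> continuous (Tt t f)) /\
      (forall t (f g : Lb -> R) (a : R), 0 <= t -> continuous f -> continuous g ->
         Tt t (fun x => a * f x + g x) = (fun x => a * Tt t f x + Tt t g x)) /\
      (forall f : Lb -> R, continuous f -> Tt 0 f = f) /\
      (forall s t (f : Lb -> R), 0 <= s -> 0 <= t -> continuous f ->
         Tt (s + t) f = Tt s (Tt t f)) /\
      (forall t (f : Lb -> R), 0 <= t -> continuous f -> (forall x, 0 <= f x) ->
         forall x, 0 <= Tt t f x) /\
      (forall t, 0 <= t -> Tt t (fun _ => 1) = (fun _ => 1)) /\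
      (forall f : Lb -> R, continuous f -> ucvg (0^'+) (fun t => Tt t f) f).

End Defs.

Arguments pup {R L}.
Arguments Tker {R L}.
Arguments Top {R L}.
Arguments pi_n {R L Lb}.
Arguments ucvg {R Lb I}.
Arguments span_of {R Lb}.
Arguments fin_dim_subspace {R Lb}.
Arguments chain_fdd {R L Lb}.
Arguments semi_fdd {R Lb}.
Arguments generated_by_closure {R Lb}.
Arguments markov_semigroup {R Lb}.

(* Main.v *)
Require Import Defs.
From HB Require Import structures.
From mathcomp Require Import all_boot all_order all_algebra.
From mathcomp Require Import all_classical all_reals all_analysis.
From mathcomp Require Import ring lra.
Import Order.TTheory GRing.Theory Num.Theory.
Import numFieldNormedType.Exports.
Local Open Scope classical_set_scope.
Local Open Scope ring_scope.

Section LA.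
Variables (R : fieldType) (X : Type) (d : nat) (b : 'I_d -> X -> R).

Definition evmx {N} (ys : 'I_N -> X) : 'M[R]_(d, N) := \matrix_(i, j) b i (ys j).

Definition good {N} (ys : 'I_N -> X) :=
  forall c : 'rV[R]_d, (c <= kermx (evmx ys))%MS -> forall x, \sum_i c 0 i * b i x = 0.

Lemma good_exists_r r : forall N (ys : 'I_N -> X), (\rank (kermx (evmx ys)) <= r)%N ->
  exists N' (ys' : 'I_N' -> X), good ys'.
Proof.
elim: r => [|r IH] N ys Hr.
  exists N, ys => c Hc x.
  have : (\rank c <= 0)%N by apply: leq_trans (mxrankS Hc) Hr.
  rewrite leqn0 mxrank_eq0 => /eqP ->.
  by rewrite big1 // => i _; rewrite mxE mul0r.
case: (boolp.pselect (good ys)) => [g|ng]; first by exists N, ys.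
have [c [Hc [x Hx]]] : exists c : 'rV[R]_d, (c <= kermx (evmx ys))%MS /\
   exists x, \sum_i c 0 i * b i x <> 0.
  apply: contra_notP ng => H c Hc x; apply: contra_notP H => Hx.
  by exists c; split => //; exists x.
pose ys' : 'I_N.+1 -> X := fun j => match unlift ord_max j with Some j' => ys j' | None => x end.
apply: (IH N.+1 ys').
have sub : (kermx (evmx ys') <= kermx (evmx ys))%MS.
  apply/sub_kermxP; apply/matrixP => i j.
  have /sub_kermxP/matrixP/(_ i (lift ord_max j)) := submx_refl (kermx (evmx ys')).
  rewrite !mxE => E; rewrite -[RHS]E; apply: eq_bigr => l _; rewrite !mxE /ys' liftK //.

have lt : (kermx (evmx ys') < kermx (evmx ys))%MS.
  rewrite ltmxE sub /=; apply/negP => H.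
  have /sub_kermxP/matrixP/(_ 0 ord_max) := submx_trans Hc H.
  rewrite !mxE => E; apply: Hx; rewrite -[RHS]E; apply: eq_bigr => l _.
  by rewrite !mxE /ys' unlift_none.
by rewrite -ltnS; apply: leq_trans (rank_ltmx lt) Hr.
Qed.

Lemma coef_exists : exists N (ys : 'I_N -> X) (P : 'I_N -> 'I_d -> R),
  forall (c : 'I_d -> R) x,
    \sum_i (\sum_j (\sum_l c l * b l (ys j)) * P j i) * b i x = \sum_i c i * b i x.
Proof.
have [N [ys g]] := @good_exists_r d 0 (fun j : 'I_0 => False_rect X ((notF (ltn_ord j)))) (rank_leq_row _).
exists N, ys, (fun j i => pinvmx (evmx ys) j i) => c x.
pose cr : 'rV[R]_d := \row_i c i.
pose u := cr *m evmx ys.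
have Hu : u *m pinvmx (evmx ys) *m evmx ys = u by rewrite mulmxKpV // submxMl.
have E : forall j, \sum_l c l * b l (ys j) = u 0 j.
  by move=> j; rewrite !mxE; apply: eq_bigr => l _; rewrite !mxE.
have Hk : (u *m pinvmx (evmx ys) - cr <= kermx (evmx ys))%MS.
  by apply/sub_kermxP; rewrite mulmxBl Hu /u subrr.
have K := g _ Hk x.
have {}K : \sum_i ((u *m pinvmx (evmx ys)) 0 i * b i x - c i * b i x) = 0.
  by rewrite -[RHS]K; apply: eq_bigr => i _; rewrite !mxE mulrBl.
move: K; rewrite sumrB => /eqP; rewrite subr_eq0 => /eqP <-.
apply: eq_bigr => i _; congr (_ * _); rewrite !mxE; apply: eq_bigr => j _.
by rewrite E.
Qed.
End LA.
Arguments coef_exists {R X d}.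

Section Disc.
Variables (R : realType) (L : nat -> finType)
  (pd : forall n, L n.+1 -> L n -> R) (M : forall n, L n -> R).
Hypothesis pd_ge0 : forall n (nu : L n.+1) (mu : L n), 0 <= pd n nu mu.
Hypothesis pd_sum1 : forall n (nu : L n.+1), \sum_(mu : L n) pd n nu mu = 1.
Hypothesis M_gt0 : forall n (lam : L n), 0 < M n lam.
Hypothesis M_coh : forall n (mu : L n), \sum_(lam : L n.+1) M n.+1 lam * pd n lam mu = M n mu.

Lemma Tker_ge0 n l l' : 0 <= Tker pd M n l l'.
Proof.
apply: sumr_ge0 => nu _; apply: mulr_ge0 => //; rewrite /pup.
by apply: mulr_ge0 => //; apply: divr_ge0; apply: ltW.
Qed.

Lemma Tker_sum1 n l : \sum_l' Tker pd M n l l' = 1.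
Proof.
rewrite /Tker exchange_big /=.
transitivity (\sum_nu pup pd M n l nu).
  by apply: eq_bigr => nu _; rewrite -mulr_sumr pd_sum1 mulr1.
rewrite /pup.
transitivity ((\sum_nu M n.+1 nu * pd n nu l) / M n l).
  by rewrite mulr_suml; apply: eq_bigr => nu _; rewrite mulrAC.
by rewrite M_coh divff // gt_eqF.
Qed.

Lemma Top_linE n a (g h : L n -> R) :
  Top pd M n (fun x => a * g x + h x) = fun x => a * Top pd M n g x + Top pd M n h x.
Proof.
apply: boolp.funext => l; rewrite /Top mulr_sumr -big_split /=.
by apply: eq_bigr => l' _; rewrite mulrDr mulrCA.
Qed.

Lemma Top_sum n d (c : 'I_d -> R) (g : 'I_d -> L n -> R) l :
  Top pd M n (fun x => \sum_i c i * g i x) l = \sum_i c i * Top pd M n (g i) l.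
Proof.
rewrite /Top.
under eq_bigr do rewrite mulr_sumr.
rewrite exchange_big /=; apply: eq_bigr => i _; rewrite mulr_sumr.
by apply: eq_bigr => l' _; rewrite mulrCA.
Qed.

Lemma Top_bound n (g : L n -> R) C : (forall x, `|g x| <= C) ->
  forall l, `|Top pd M n g l| <= C.
Proof.
move=> Hg l; rewrite /Top.
apply: le_trans (ler_norm_sum _ _ _) _.
apply: le_trans (_ : \sum_l' Tker pd M n l l' * C <= C).
  apply: ler_sum => l' _; rewrite normrM ger0_norm ?Tker_ge0 //.
  by apply: ler_wpM2l => //; apply: Tker_ge0.
by rewrite -mulr_suml Tker_sum1 mul1r.
Qed.

Lemma iter_bound n k (g : L n -> R) C : (forall x, `|g x| <= C) ->
  forall l, `|iter k (Top pd M n) g l| <= C.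
Proof. by elim: k => [|k IH] //= Hg l; apply: Top_bound => x; apply: IH. Qed.

Lemma iter_linE n k a (g h : L n -> R) :
  iter k (Top pd M n) (fun x => a * g x + h x) =
  fun x => a * iter k (Top pd M n) g x + iter k (Top pd M n) h x.
Proof. by elim: k => [|k IH] //=; rewrite IH Top_linE. Qed.

Lemma iter_diff n k (g h : L n -> R) l :
  iter k (Top pd M n) g l - iter k (Top pd M n) h l =
  iter k (Top pd M n) (fun x => g x - h x) l.
Proof.
have -> : (fun x => g x - h x) = (fun x => (-1) * h x + g x).
  by apply: boolp.funext => x; rewrite mulN1r addrC.
by rewrite iter_linE mulN1r addrC.
Qed.

Lemma iter_sum n k d (c : 'I_d -> R) (g : 'I_d -> L n -> R) l :
  iter k (Top pd M n) (fun x => \sum_i c i * g i x) l =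
  \sum_i c i * iter k (Top pd M n) (g i) l.
Proof.
elim: k l => [|k IH] l //=.
have -> : iter k (Top pd M n) (fun x => \sum_i c i * g i x) =
  (fun x => \sum_i c i * iter k (Top pd M n) (g i) x).
  by apply: boolp.funext => x; rewrite IH.
by rewrite Top_sum.
Qed.
End Disc.
Arguments Tker_ge0 {R L pd M}.
Arguments Tker_sum1 {R L pd M}.
Arguments Top_linE {R L pd M}.
Arguments Top_sum {R L pd M}.
Arguments Top_bound {R L pd M}.
Arguments iter_bound {R L pd M}.
Arguments iter_linE {R L pd M}.
Arguments iter_diff {R L pd M}.
Arguments iter_sum {R L pd M}.

Section Cont.
Variables (R : realType) (Lb : pseudoPMetricType R).
Lemma cont_add (f g : Lb -> R) : continuous f -> continuous g -> continuous (fun x => f x + g x).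
Proof. by move=> cf cg x; exact: (@continuousD _ _ _ f g x (cf x) (cg x)). Qed.
Lemma cont_mul (f g : Lb -> R) : continuous f -> continuous g -> continuous (fun x => f x * g x).
Proof. by move=> cf cg x; exact: (@continuousM _ _ f g x (cf x) (cg x)). Qed.
Lemma cont_cst (c : R) : continuous (fun _ : Lb => c).
Proof. exact: cst_continuous. Qed.
Lemma cont_scale (c : R) (f : Lb -> R) : continuous f -> continuous (fun x => c * f x).
Proof. by move=> cf; apply: cont_mul => //; apply: cont_cst. Qed.
Lemma cont_sub (f g : Lb -> R) : continuous f -> continuous g -> continuous (fun x => f x - g x).
Proof. by move=> cf cg x; exact: (@continuousB _ _ _ f g x (cf x) (cg x)). Qed.
Lemma cont_sum d (c : 'I_d -> R) (b : 'I_d -> Lb -> R) : (forall i, continuous (b i)) ->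
  continuous (fun x => \sum_i c i * b i x).
Proof.
elim: d c b => [|d IH] c b cb.
  by under boolp.eq_fun do rewrite big_ord0; apply: cont_cst.
under boolp.eq_fun do rewrite big_ord_recr /=.
apply: cont_add; last by apply: cont_scale.
exact: (IH (fun i => c (widen_ord (leqnSn d) i)) (fun i => b (widen_ord (leqnSn d) i))).
Qed.
End Cont.

Section SG.
Variables (R : realType) (Lb : pseudoPMetricType R) (Tt : R -> (Lb -> R) -> (Lb -> R)).
Hypothesis Tc : forall t (f : Lb -> R), 0 <= t -> continuous f -> continuous (Tt t f).
Hypothesis Tl : forall t (f g : Lb -> R) (a : R), 0 <= t -> continuous f -> continuous g ->
         Tt t (fun x => a * f x + g x) = (fun x => a * Tt t f x + Tt t g x).
Hypothesis Tp : forall t (f : Lb -> R), 0 <= t -> continuous f -> (forall x, 0 <= f x) ->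
         forall x, 0 <= Tt t f x.
Hypothesis T1 : forall t, 0 <= t -> Tt t (fun _ => 1) = (fun _ => 1).

Lemma T_zero t : 0 <= t -> Tt t (fun _ => 0) = fun _ => 0.
Proof.
move=> t0; have := Tl t (fun _ => 0) (fun _ => 0) 1 t0 (@cont_cst _ _ 0) (@cont_cst _ _ 0).
have -> : (fun _ : Lb => 1 * 0 + 0) = (fun _ => 0 : R) by apply: boolp.funext => x; rewrite mulr0 addr0.
move=> E; apply: boolp.funext => x.
have E' := congr1 (fun f => f x) E; simpl in E'; rewrite mul1r in E'.
by apply: (@addrI _ (Tt t (fun _ => 0) x)); rewrite addr0 -E'.
Qed.

Lemma T_cst t c : 0 <= t -> Tt t (fun _ => c) = fun _ => c.
Proof.
move=> t0; have := Tl t (fun _ => 1) (fun _ => 0) c t0 (@cont_cst _ _ 1) (@cont_cst _ _ 0).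
have -> : (fun _ : Lb => c * 1 + 0) = (fun _ => c : R) by apply: boolp.funext => x; rewrite mulr1 addr0.
by rewrite T1 // T_zero // => ->; apply: boolp.funext => x; rewrite mulr1 addr0.
Qed.

Lemma T_diff t (f g : Lb -> R) x : 0 <= t -> continuous f -> continuous g ->
  Tt t f x - Tt t g x = Tt t (fun y => f y - g y) x.
Proof.
move=> t0 cf cg.
have -> : (fun y => f y - g y) = (fun y => (-1) * g y + f y).
  by apply: boolp.funext => y; rewrite mulN1r addrC.
by rewrite Tl // mulN1r addrC.
Qed.

Lemma T_sum t d (c : 'I_d -> R) (b : 'I_d -> Lb -> R) : 0 <= t -> (forall i, continuous (b i)) ->
  Tt t (fun x => \sum_i c i * b i x) = fun x => \sum_i c i * Tt t (b i) x.
Proof.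
move=> t0; elim: d c b => [|d IH] c b cb.
  under boolp.eq_fun do rewrite big_ord0.
  by rewrite T_zero //; apply: boolp.funext => x; rewrite big_ord0.
have -> : (fun x => \sum_(i < d.+1) c i * b i x) =
  (fun x => c ord_max * b ord_max x + \sum_(i < d) c (widen_ord (leqnSn d) i) * b (widen_ord (leqnSn d) i) x).
  by apply: boolp.funext => x; rewrite big_ord_recr addrC.
rewrite Tl //; last by apply: cont_sum.
rewrite (IH (fun i => c (widen_ord (leqnSn d) i)) (fun i => b (widen_ord (leqnSn d) i))) //.
by apply: boolp.funext => x; rewrite big_ord_recr /= addrC.
Qed.

Lemma T_bound t (f : Lb -> R) C : 0 <= t -> continuous f -> (forall x, `|f x| <= C) ->
  forall x, `|Tt t f x| <= C.
Proof.
move=> t0 cf Hf x; rewrite ler_norml; apply/andP; split.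
  have := Tp t (fun y => 1 * f y + C) t0 _ _ x.
  rewrite Tl //; last by apply: cont_cst.
  rewrite T_cst // mul1r -lerBlDr sub0r; apply.
    by apply: cont_add; [apply: cont_scale | apply: cont_cst].
  by move=> y; rewrite mul1r -lerBlDr sub0r; have := Hf y; rewrite ler_norml => /andP[].
have := Tp t (fun y => (-1) * f y + C) t0 _ _ x.
rewrite Tl //; last by apply: cont_cst.
rewrite T_cst // mulN1r addrC subr_ge0; apply.
  by apply: cont_add; [apply: cont_scale | apply: cont_cst].
by move=> y; rewrite mulN1r addrC subr_ge0; have := Hf y; rewrite ler_norml => /andP[].
Qed.
End SG.
Arguments T_zero {R Lb Tt}.
Arguments T_cst {R Lb Tt}.
Arguments T_diff {R Lb Tt}.
Arguments T_sum {R Lb Tt}.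
Arguments T_bound {R Lb Tt}.
Arguments cont_sum {R Lb d}.
Arguments cont_add {R Lb}.
Arguments cont_sub {R Lb}.
Arguments cont_mul {R Lb}.
Arguments cont_scale {R Lb}.
Arguments cont_cst {R Lb}.

Section Span.
Variables (R : realType) (Lb : pseudoPMetricType R) (d : nat) (b : 'I_d -> Lb -> R).

Lemma span_b i : span_of d b (b i).
Proof.
exists (fun l => (l == i)%:R) => x.
by rewrite (bigD1 i) //= eqxx mul1r big1 ?addr0 // => l /negbTE ->; rewrite mul0r.
Qed.

Lemma span_lin a (f g : Lb -> R) : span_of d b f -> span_of d b g ->
  span_of d b (fun x => a * f x + g x).
Proof.
move=> [cf Hf] [cg Hg]; exists (fun i => a * cf i + cg i) => x.
rewrite Hf Hg mulr_sumr -big_split /=; apply: eq_bigr => i _.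
by rewrite mulrDl mulrA.
Qed.

Lemma span_comb d' (c : 'I_d' -> R) (g : 'I_d' -> Lb -> R) :
  (forall j, span_of d b (g j)) -> span_of d b (fun x => \sum_j c j * g j x).
Proof.
move=> Hg; have [cc Hcc] := boolp.choice (fun j => Hg j).
exists (fun l => \sum_j c j * cc j l) => x.
under eq_bigr do rewrite Hcc mulr_sumr.
rewrite exchange_big /=; apply: eq_bigr => l _.
by rewrite mulr_suml; apply: eq_bigr => j _; rewrite mulrA.
Qed.

Lemma span_ext (f g : Lb -> R) : (forall x, f x = g x) -> span_of d b f -> span_of d b g.
Proof. by move=> E; have -> : f = g by apply: boolp.funext. Qed.

Lemma span_cont (f : Lb -> R) : (forall i, continuous (b i)) -> span_of d b f -> continuous f.
Proof.
move=> cb [c Hc]; have -> : f = fun x => \sum_i c i * b i x by apply: boolp.funext.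
exact: cont_sum.
Qed.
End Span.
Arguments span_b {R Lb d b}.
Arguments span_lin {R Lb d b}.
Arguments span_comb {R Lb d b d'}.
Arguments span_ext {R Lb d b}.
Arguments span_cont {R Lb d b}.
Lemma span_scale (R : realType) (Lb : pseudoPMetricType R) d (b : 'I_d -> Lb -> R) a f :
  span_of d b f -> span_of d b (fun x => a * f x).
Proof. by move=> [c Hc]; exists (fun i => a * c i) => x; rewrite Hc mulr_sumr; apply: eq_bigr => i _; rewrite mulrA. Qed.
Arguments span_scale {R Lb d b}.

Lemma cont_bounded (R : realType) (Lb : pseudoPMetricType R) (f : Lb -> R) :
  compact [set: Lb] -> continuous f -> exists C, 0 <= C /\ forall x, `|f x| <= C.
Proof.
move=> cpt fc.
have /compact_bounded [C [Cr HC]] : compact (f @` setT).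
  by apply: continuous_compact => //; apply: continuous_subspaceT.
exists (Num.max 0 (C + 1)); split; first by rewrite le_max lexx.
move=> x; apply: (HC (Num.max 0 (C+1))).
  by rewrite lt_max ltrDl ltr01 orbT.
by exists x.
Qed.

Lemma fam_bounded (R : realType) (Lb : pseudoPMetricType R) d (f : 'I_d -> Lb -> R) :
  compact [set: Lb] -> (forall i, continuous (f i)) ->
  exists C, 0 <= C /\ forall i x, `|f i x| <= C.
Proof.
move=> cpt fc.
have [C HC] := boolp.choice (fun i => @cont_bounded R Lb (f i) cpt (fc i)).
exists (\sum_i C i); split; first by apply: sumr_ge0 => i _; case: (HC i).
move=> i x; apply: le_trans (proj2 (HC i) x) _.
rewrite (bigD1 i) //= lerDl; apply: sumr_ge0 => j _; by case: (HC j).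
Qed.

Lemma near_oo_ex (P : nat -> Prop) : (\forall n \near \oo, P n) -> exists N, forall n, (N <= n)%N -> P n.
Proof. by case=> N _ H; exists N. Qed.

Lemma near_right_ex (R : realType) (P : R -> Prop) : (\forall s \near 0^'+, P s) ->
  exists2 d, 0 < d & forall s, 0 < s < d -> P s.
Proof.
case=> d /= d0 H; exists d => // s /andP[s0 sd]; apply: H.
  by rewrite /ball /= sub0r normrN gtr0_norm.
by [].
Qed.

Lemma pow_expR (R : realType) (x : R) j : 0 <= x -> (1 + x) ^+ j <= expR (j%:R * x).
Proof.
move=> x0; elim: j => [|j IH]; first by rewrite expr0 mul0r expR0.
rewrite exprS; have -> : ((j.+1)%:R : R) = j%:R + 1 by rewrite natr1.
rewrite (_ : (j%:R + 1) * x = j%:R * x + x); last by ring.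
rewrite expRD mulrC.
apply: ler_pM => //; [by apply: exprn_ge0; lra | by apply: addr_ge0 | exact: expR_ge1Dx].

Qed.
Arguments near_right_ex {R P}.
Arguments near_oo_ex {P}.

Section ML.
Variables (R : realType) (L : nat -> finType)
  (pd : forall n, L n.+1 -> L n -> R) (M : forall n, L n -> R)
  (Lb : pseudoPMetricType R) (iota : forall n, L n -> Lb)
  (Fm : nat -> set (Lb -> R)) (eps : nat -> R)
  (A : (Lb -> R) -> (Lb -> R)) (Tt : R -> (Lb -> R) -> (Lb -> R)).
Hypothesis pd_ge0 : forall n (nu : L n.+1) (mu : L n), 0 <= pd n nu mu.
Hypothesis pd_sum1 : forall n (nu : L n.+1), \sum_(mu : L n) pd n nu mu = 1.
Hypothesis M_gt0 : forall n (lam : L n), 0 < M n lam.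
Hypothesis M_coh : forall n (mu : L n), \sum_(lam : L n.+1) M n.+1 lam * pd n lam mu = M n mu.
Hypothesis Tc : forall t (f : Lb -> R), 0 <= t -> continuous f -> continuous (Tt t f).
Hypothesis Tl : forall t (f g : Lb -> R) (a : R), 0 <= t -> continuous f -> continuous g ->
         Tt t (fun x => a * f x + g x) = (fun x => a * Tt t f x + Tt t g x).
Hypothesis T0 : forall f : Lb -> R, continuous f -> Tt 0 f = f.
Hypothesis Ts : forall s t (f : Lb -> R), 0 <= s -> 0 <= t -> continuous f ->
         Tt (s + t) f = Tt s (Tt t f).
Hypothesis Tp : forall t (f : Lb -> R), 0 <= t -> continuous f -> (forall x, 0 <= f x) ->
         forall x, 0 <= Tt t f x.
Hypothesis T1 : forall t, 0 <= t -> Tt t (fun _ => 1) = (fun _ => 1).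
Hypothesis cpt : compact [set: Lb].
Hypothesis HFm : forall m, fin_dim_subspace (Fm m).
Hypothesis HA3 : forall m, \forall n \near \oo, forall f, Fm m f ->
        exists g, Fm m g /\ pi_n iota n g = Top pd M n (pi_n iota n f).
Hypothesis eps_gt0 : forall n, 0 < eps n.
Hypothesis eps_cvg : eps @ \oo --> 0.
Hypothesis HA4 : forall m f, Fm m f ->
     Fm m (A f) /\
     forall g : nat -> Lb -> R,
       (\forall n \near \oo, Fm m (g n) /\
          pi_n iota n (g n) =
            (fun lam => (Top pd M n (pi_n iota n f) lam - pi_n iota n f lam)
                        / eps n)) ->
       ucvg \oo g (A f).
Hypothesis Hgen : generated_by_closure Tt (\bigcup_m Fm m) A.

Lemma deriv_basis m d (b : 'I_d -> Lb -> R) : Fm m = span_of d b ->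
  (forall i, continuous (b i)) -> forall e1, 0 < e1 ->
  exists2 s0, 0 < s0 & forall s, 0 <= s <= s0 -> forall i x,
    `|Tt s (b i) x - b i x - s * A (b i) x| <= s * e1.
Proof.
move=> HF cb e1 e10.
have cA : forall i, continuous (A (b i)).
  move=> i; apply: (span_cont _ cb); rewrite -HF.
  have Hb : Fm m (b i) by rewrite HF; apply: span_b.
  exact: (HA4 m (b i) Hb).1.
have Hi : forall i, \forall s \near 0^'+, forall x,
    `|(Tt s (b i) x - b i x) / s - A (b i) x| < e1.
  move=> i; apply: ((Hgen _ _ (cb i) (cA i)).2 _ e1 e10).
  exists (fun _ => b i); split; first by move=> k; exists m => //; rewrite HF; apply: span_b.
  by split => e e0; apply: nearW => k x; rewrite subrr normr0.
have [del del0 Hdel] := near_right_ex (filter_forall _ Hi).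
exists (del / 2); first by lra.
move=> s /andP[s0 ss0] i x.
have [->|sn0] := eqVneq s 0.
  by rewrite T0 // subrr !mul0r subr0 normr0.
have spos : 0 < s by rewrite lt_def sn0 s0.
have := Hdel s _ i x; rewrite spos /= => /(_ _)/ltW.
have -> : (Tt s (b i) x - b i x - s * A (b i) x) = s * ((Tt s (b i) x - b i x) / s - A (b i) x).
  by field.
by rewrite normrM gtr0_norm // => H; rewrite ler_pM2l //; apply: H; lra.
Qed.


Lemma ML_span m (phi : Lb -> R) : Fm m phi -> forall t, 0 <= t ->
  forall k : nat -> nat, (forall n, `|(k n)%:R * eps n - t| <= 2 * eps n) ->
  forall e, 0 < e -> \forall n \near \oo, forall lam : L n,
    `|iter (k n) (Top pd M n) (pi_n iota n phi) lam - Tt t phi (iota n lam)| < e.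
Proof.
move=> Hphi t t0 k Hk e e0.
have [d [b [cb HF]]] := HFm m.
have Hphi' : span_of d b phi by rewrite -HF.
have cphi : continuous phi := span_cont _ cb Hphi'.
have bFm : forall i, Fm m (b i) by move=> i; rewrite HF; apply: span_b.
have [N [ys [P HP]]] := coef_exists b.
pose coef (psi : Lb -> R) (i : 'I_d) := \sum_j psi (ys j) * P j i.
have coefK : forall psi, span_of d b psi -> forall x, \sum_i coef psi i * b i x = psi x.
  move=> psi [c Hc] x; rewrite Hc -(HP c x) /coef; apply: eq_bigr => i _; congr (_ * _).
  by apply: eq_bigr => j _; rewrite Hc.
pose K := \sum_i \sum_j `|P j i|.
have K0 : 0 <= K by apply: sumr_ge0 => i _; apply: sumr_ge0.
have coef_bound : forall psi C, (forall x, `|psi x| <= C) -> \sum_i `|coef psi i| <= K * C.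
  move=> psi C HC; rewrite /K mulr_suml; apply: ler_sum => i _.
  apply: le_trans (ler_norm_sum _ _ _) _; rewrite mulr_suml; apply: ler_sum => j _.
  by rewrite normrM mulrC ler_wpM2l.
have coef_lin : forall psi1 psi2 a i,
    coef (fun x => psi1 x + a * psi2 x) i = coef psi1 i + a * coef psi2 i.
  move=> psi1 psi2 a i; rewrite /coef mulr_sumr -big_split /=; apply: eq_bigr => j _.
  by rewrite mulrDl mulrA.
have coef_ext : forall psi1 psi2, (forall x, psi1 x = psi2 x) -> coef psi1 = coef psi2.
  move=> psi1 psi2 E; rewrite /coef; apply: boolp.funext => i.
  by apply: eq_bigr => j _; rewrite E.
pose psi (c : 'I_d -> R) x := \sum_i c i * b i x.
have cpsi : forall c, continuous (psi c) by move=> c; apply: cont_sum.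
have AFm : forall i, Fm m (A (b i)) by move=> i; exact: (HA4 m (b i) (bFm i)).1.
have cA : forall i, continuous (A (b i)).
  by move=> i; apply: (span_cont _ cb); rewrite -HF.
have [A0 [A00 HA0]] := @fam_bounded R Lb d (fun i => A (b i)) cpt cA.
pose Pinv n := forall f, Fm m f -> exists g, Fm m g /\ pi_n iota n g = Top pd M n (pi_n iota n f).
have /boolp.choice [g Hg] : forall n, exists G : 'I_d -> Lb -> R, Pinv n -> forall i,
    Fm m (G i) /\ pi_n iota n (G i) = Top pd M n (pi_n iota n (b i)).
  move=> n; case: (boolp.pselect (Pinv n)) => [Hn|Hn]; last by exists (fun _ _ => 0).
  have [G HG] := boolp.choice (fun i => Hn (b i) (bFm i)).
  by exists G.
pose h n i x := (g n i x - b i x) / eps n.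
have Hh : forall i, ucvg \oo (fun n => h n i) (A (b i)).
  move=> i; apply: (HA4 m (b i) (bFm i)).2.
  apply: filterS (HA3 m) => n Hn; have [Hg1 Hg2] := Hg n Hn i; split.
    rewrite HF; apply: (span_ext (fun x => (eps n)^-1 * g n i x + ((-(eps n)^-1) * b i x))).
      by move=> x; rewrite /h; field; rewrite gt_eqF.
    by apply: span_lin; [rewrite -HF | apply: span_scale; rewrite -HF].
  by apply: boolp.funext => lam; move: Hg2; rewrite /pi_n /h => <-.
have hr : forall r, 0 < r -> \forall n \near \oo, forall i x, `|h n i x - A (b i) x| < r.
  by move=> r r0; apply: filter_forall => i; exact: (Hh i r r0).
pose step n (c : 'I_d -> R) := coef (fun x => \sum_i c i * g n i x).
pose cs n j := iter j (step n) (coef phi).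
have canon : forall n, Pinv n -> forall j, exists chi, span_of d b chi /\ cs n j = coef chi.
  move=> n Hn [|j]; first by exists phi.
  exists (fun x => \sum_i cs n j i * g n i x); split => //.
  by apply: span_comb => i; rewrite -HF; case: (Hg n Hn i).
have gspan : forall n, Pinv n -> forall c, span_of d b (fun x => \sum_i c i * g n i x).
  by move=> n Hn c; apply: span_comb => i; rewrite -HF; case: (Hg n Hn i).
have psiC : forall n, Pinv n -> forall j, coef (psi (cs n j)) = cs n j.
  move=> n Hn j; have [chi [Hchi ->]] := canon n Hn j.
  by apply: coef_ext => x; rewrite /psi coefK.
have psi0 : forall n x, psi (cs n 0%N) x = phi x by move=> n x; rewrite /psi coefK.
have psiS : forall n, Pinv n -> forall j x,
    psi (cs n j.+1) x = \sum_i cs n j i * g n i x.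
  by move=> n Hn j x; rewrite /psi /cs iterS -/(cs n j) /step coefK //; apply: gspan.
have gE : forall n i x, g n i x = b i x + eps n * h n i x.
  by move=> n i x; rewrite /h; field; rewrite gt_eqF.
have F2 : forall n, Pinv n -> forall j x,
    psi (cs n j.+1) x = psi (cs n j) x + eps n * \sum_i cs n j i * h n i x.
  move=> n Hn j x; rewrite psiS // /psi mulr_sumr -big_split /=.
  by apply: eq_bigr => i _; rewrite gE; ring.
have F3 : forall n, Pinv n -> forall j i,
    cs n j.+1 i = cs n j i + eps n * coef (fun x => \sum_i cs n j i * h n i x) i.
  move=> n Hn j i; rewrite -(psiC n Hn j.+1) (coef_ext _ _ (F2 n Hn j)) coef_lin.
  by rewrite psiC.
pose K1 := K * (A0 + 1).
have K10 : 0 <= K1 by apply: mulr_ge0 => //; lra.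
have F4 : forall n, Pinv n -> (forall i x, `|h n i x - A (b i) x| < 1) -> forall j,
    \sum_i `|cs n j.+1 i| <= (1 + eps n * K1) * \sum_i `|cs n j i|.
  move=> n Hn H1 j; set S := \sum_i `|cs n j i|.
  have S0 : 0 <= S by apply: sumr_ge0.
  have Hhb : forall x, `|\sum_i cs n j i * h n i x| <= S * (A0 + 1).
    move=> x; apply: le_trans (ler_norm_sum _ _ _) _; rewrite /S mulr_suml.
    apply: ler_sum => i _; rewrite normrM; apply: ler_wpM2l => //.
    have : `|h n i x| <= `|h n i x - A (b i) x| + `|A (b i) x|.
      by rewrite -[X in `|X| <= _](subrK (A (b i) x)) ler_normD.
    by have := H1 i x; have := HA0 i x; lra.
  have HC := coef_bound _ _ Hhb.
  under eq_bigr do rewrite F3 //.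
  apply: le_trans (_ : \sum_i (`|cs n j i| + eps n * `|coef (fun x => \sum_i cs n j i * h n i x) i|) <= _).
    apply: ler_sum => i _; apply: le_trans (ler_normD _ _) _.
    by rewrite normrM gtr0_norm.
  rewrite big_split /= -mulr_sumr -/S.
  have e0' := eps_gt0 n.
  have : eps n * \sum_i `|coef (fun x => \sum_i cs n j i * h n i x) i| <= eps n * (K * (S * (A0 + 1))).
    by rewrite ler_pM2l.
  rewrite /K1; nra.
have F5 : forall n, Pinv n -> (forall i x, `|h n i x - A (b i) x| < 1) -> forall j,
    \sum_i `|cs n j i| <= expR (j%:R * (eps n * K1)) * \sum_i `|coef phi i|.
  move=> n Hn H1 j; apply: le_trans (_ : _ <= (1 + eps n * K1) ^+ j * \sum_i `|coef phi i|) _.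
    elim: j => [|j IH]; first by rewrite expr0 mul1r.
    apply: le_trans (F4 n Hn H1 j) _; rewrite exprS -mulrA ler_pM2l //.
    by have := eps_gt0 n; nra.
  apply: ler_wpM2r; first by apply: sumr_ge0.
  by apply: pow_expR; apply: mulr_ge0 => //; apply: ltW.
have F6 : forall n, Pinv n -> forall r, (forall i x, `|h n i x - A (b i) x| < r) ->
    forall s e1, 0 <= s -> (forall i x, `|Tt s (b i) x - b i x - s * A (b i) x| <= s * e1) ->
    forall j x, `|Tt s (psi (cs n j)) x - psi (cs n j.+1) x| <=
      \sum_i `|cs n j i| * (s * e1 + `|s - eps n| * A0 + eps n * r).
  move=> n Hn r Hr s e1 s0 Hs j x.
  rewrite F2 // /psi (T_sum Tl) //.
  have -> : \sum_i cs n j i * Tt s (b i) x - (\sum_i cs n j i * b i x + eps n * \sum_i cs n j i * h n i x)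
    = \sum_i cs n j i * ((Tt s (b i) x - b i x - s * A (b i) x) + (s - eps n) * A (b i) x
         + eps n * (A (b i) x - h n i x)).
    rewrite mulr_sumr -big_split /= -sumrB; apply: eq_bigr => i _; ring.
  apply: le_trans (ler_norm_sum _ _ _) _; apply: ler_sum => i _.
  rewrite normrM; apply: ler_wpM2l => //.
  apply: le_trans (ler_normD _ _) _; apply: lerD; last first.
    rewrite normrM gtr0_norm // ler_pM2l // distrC; exact: ltW.
  apply: le_trans (ler_normD _ _) _; apply: lerD; first exact: Hs.
  by rewrite normrM; apply: ler_wpM2l.
have F1 : forall n, Pinv n -> forall j lam,
    psi (cs n j) (iota n lam) = iter j (Top pd M n) (pi_n iota n phi) lam.
  move=> n Hn; elim=> [|j IH] lam; first by rewrite psi0.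
  rewrite psiS // iterS.
  have -> : iter j (Top pd M n) (pi_n iota n phi) = fun l => \sum_i cs n j i * b i (iota n l).
    by apply: boolp.funext => l; rewrite -IH.
  rewrite Top_sum; apply: eq_bigr => i _; congr (_ * _).
  by have [_ /(congr1 (fun F => F lam))] := Hg n Hn i.
have F7 : forall n, Pinv n -> forall r, 0 <= r -> (forall i x, `|h n i x - A (b i) x| < r) ->
    forall s e1, 0 <= s -> 0 <= e1 -> (forall i x, `|Tt s (b i) x - b i x - s * A (b i) x| <= s * e1) ->
    forall Cb kk, (forall j, (j < kk)%N -> \sum_i `|cs n j i| <= Cb) ->
    forall j, (j <= kk)%N -> forall x,
      `|Tt (j%:R * s) phi x - psi (cs n j) x| <=
        j%:R * (Cb * (s * e1 + `|s - eps n| * A0 + eps n * r)).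
  move=> n Hn r r0 Hr s e1 s0 e10 Hs Cb kk HC; set eta := (s * e1 + _ + _).
  have eta0 : 0 <= eta.
    rewrite /eta; have := eps_gt0 n; have : 0 <= `|s - eps n| * A0 by apply: mulr_ge0.
    have : 0 <= s * e1 by apply: mulr_ge0.
    have : 0 <= eps n * r by apply: mulr_ge0 => //; apply: ltW.
    lra.
  elim=> [|j IH] Hj x.
    by rewrite !mul0r T0 // psi0 subrr normr0.
  have sj0 : 0 <= j%:R * s by apply: mulr_ge0.
  have -> : (j.+1)%:R * s = s + j%:R * s by rewrite -natr1; ring.
  rewrite Ts //.
  have cT := Tc _ _ sj0 cphi.
  rewrite (_ : Tt s (Tt (j%:R * s) phi) x - psi (cs n j.+1) x =
     (Tt s (Tt (j%:R * s) phi) x - Tt s (psi (cs n j)) x) +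
     (Tt s (psi (cs n j)) x - psi (cs n j.+1) x)); last by rewrite addrA subrK.
  apply: le_trans (ler_normD _ _) _.
  have -> : (j.+1)%:R * (Cb * eta) = j%:R * (Cb * eta) + Cb * eta by rewrite -natr1; ring.
  apply: lerD.
    rewrite (T_diff Tl) //; apply: (T_bound Tl Tp T1) => //.
      exact: cont_sub.
    by move=> y; apply: IH; apply: ltnW.
  apply: le_trans (F6 n Hn r Hr s e1 s0 Hs j x) _.
  by rewrite -mulr_suml; apply: ler_wpM2r => //; apply: HC.
pose C0 := \sum_i `|coef phi i|.
have C00 : 0 <= C0 by apply: sumr_ge0.
pose Cb := expR ((t + 1) * K1) * C0.
have Cb0 : 0 <= Cb by apply: mulr_ge0 => //; apply: expR_ge0.
pose Z := 2 * t + 2 * A0 + 1.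
have Z0 : 0 < Z by rewrite /Z; lra.
have CZ0 : 0 < 2 * ((Cb + 1) * Z) by apply: mulr_gt0 => //; apply: mulr_gt0 => //; lra.
pose del := Num.min 1 (e / (2 * ((Cb + 1) * Z))).
have del0 : 0 < del by rewrite lt_min ltr01 /=; apply: divr_gt0.
have del1 : del <= 1 by rewrite ge_min lexx.
have delZ : (Cb + 1) * Z * del <= e / 2.
  have : del <= e / (2 * ((Cb + 1) * Z)) by rewrite ge_min lexx orbT.
  rewrite ler_pdivlMr // => H; nra.
have [s0 s00 Hs0] := @deriv_basis m d b HF cb del del0.
have eps_small : forall c, 0 < c -> \forall n \near \oo, eps n < c.
  move=> c c0; have := cvgr0_norm_lt _ eps_cvg _ c0.
  by move=> /(_ _) H; apply: filterS H => n; rewrite gtr0_norm.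
have E1 := eps_small _ del0.
have E2 := eps_small (1/2) ltac:(lra).
have E3 : \forall n \near \oo, 0 < t -> 2 * eps n < t.
  case: (boolp.pselect (0 < t)) => [tp|tn]; last by apply: nearW => n /tn.
  have t2 : 0 < t / 2 by lra.
  by apply: filterS (eps_small _ t2) => n H _; lra.
have s03 : 0 < s0 / 3 by lra.
have E4 := eps_small _ s03.
near=> n => lam.
have Hn : Pinv n by near: n; exact: HA3 m.
have H1 : forall i x, `|h n i x - A (b i) x| < del by near: n; exact: hr del del0.
have H1' : forall i x, `|h n i x - A (b i) x| < 1 by move=> i x; apply: lt_le_trans (H1 i x) del1.
have e0n := eps_gt0 n.
have Hed : eps n < del by near: n; exact: E1.
have Heh : eps n < 1 / 2 by near: n; exact: E2.
have He3 : eps n < s0 / 3 by near: n; exact: E4.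
have Het : 0 < t -> 2 * eps n < t by near: n; exact: E3.
pose kk := k n; pose s := t / kk%:R.
have Hkk := Hk n; rewrite -/kk in Hkk.
have [Hkk1 Hkk2] : - (2 * eps n) <= kk%:R * eps n - t /\ kk%:R * eps n - t <= 2 * eps n.
  by move: Hkk; rewrite ler_norml => /andP.
have ks : kk%:R * s = t.
  have [kz|knz] := eqVneq kk 0%N.
    rewrite /s kz mul0r; move: Hkk1; rewrite kz mul0r sub0r.
    have [tz|tp] := eqVneq t 0; first by rewrite tz.
    have tpos : 0 < t by rewrite lt_def tp t0.
    by have := Het tpos; lra.
  by rewrite /s mulrCA divff ?mulr1 // pnatr_eq0.
have s0' : 0 <= s by apply: divr_ge0.
have ss0 : s <= s0.
  have [kz|knz] := eqVneq kk 0%N; first by rewrite /s kz invr0 mulr0; apply: ltW.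
  have k1 : 1 <= kk%:R :> R by rewrite ler1n lt0n.
  rewrite /s ler_pdivrMr; last by lra.
  nra.
have ss : 0 <= s <= s0 by apply/andP; split.
have Hs := Hs0 s ss.
have kbound : forall j, (j < kk)%N -> \sum_i `|cs n j i| <= Cb.
  move=> j Hj; apply: le_trans (F5 n Hn H1' j) _.
  rewrite /Cb ler_wpM2r // ler_expR.
  have jk : j%:R <= kk%:R :> R by rewrite ler_nat ltnW.
  have j0 : 0 <= j%:R :> R by [].
  rewrite mulrA; apply: ler_wpM2r => //; nra.
have := F7 n Hn del (ltW del0) H1 s del s0' (ltW del0) Hs Cb kk kbound kk (leqnn _) (iota n lam).
rewrite ks F1 // distrC => H.
apply: le_lt_trans H _.
have E : `|kk%:R * eps n - t| = kk%:R * `|s - eps n|.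
  by rewrite -{1}ks -mulrBr normrM ger0_norm ?ler0n // distrC.
have E5 : kk%:R * (Cb * (s * del + `|s - eps n| * A0 + eps n * del)) =
   Cb * (t * del + `|kk%:R * eps n - t| * A0 + kk%:R * eps n * del).
  by rewrite E -ks; ring.
rewrite E5.
have B1 : `|kk%:R * eps n - t| * A0 <= 2 * del * A0 by apply: ler_wpM2r => //; lra.
have B2 : kk%:R * eps n * del <= (t + 1) * del by apply: ler_wpM2r; lra.
have B3 : t * del + `|kk%:R * eps n - t| * A0 + kk%:R * eps n * del <= del * Z.
  by rewrite /Z; nra.
have B4 : Cb * (t * del + `|kk%:R * eps n - t| * A0 + kk%:R * eps n * del) <= Cb * (del * Z).
  by apply: ler_wpM2l.
nra.
Unshelve. all: by end_near.
Qed.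

Hypothesis Hdense : forall f : Lb -> R, continuous f ->
     exists fk : nat -> Lb -> R,
       (forall k, (\bigcup_m Fm m) (fk k)) /\ ucvg \oo fk f.

Lemma ML_gen (f : Lb -> R) : continuous f -> forall t, 0 <= t ->
  forall k : nat -> nat, (forall n, `|(k n)%:R * eps n - t| <= 2 * eps n) ->
  forall e, 0 < e -> \forall n \near \oo, forall lam : L n,
    `|iter (k n) (Top pd M n) (pi_n iota n f) lam - Tt t f (iota n lam)| < e.
Proof.
move=> cf t t0 k Hk e e0.
have e3 : 0 < e / 3 by lra.
have [fk [Hfk Hcv]] := Hdense _ cf.
have [N HN] := near_oo_ex (Hcv _ e3).
have [m _ Hphi] := Hfk N.
have [d [b [cb HF]]] := HFm m.
have cphi : continuous (fk N) by apply: (span_cont _ cb); rewrite -HF.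
have Hb : forall x, `|f x - fk N x| <= e / 3.
  by move=> x; rewrite distrC; apply: ltW; apply: HN.
apply: filterS (@ML_span m (fk N) Hphi t t0 k Hk _ e3) => n Hn lam.
have D1 : `|iter (k n) (Top pd M n) (pi_n iota n f) lam - iter (k n) (Top pd M n) (pi_n iota n (fk N)) lam| <= e / 3.
  rewrite iter_diff; apply: (iter_bound pd_ge0 pd_sum1 M_gt0 M_coh) => l.
  exact: Hb.
have D3 : `|Tt t (fk N) (iota n lam) - Tt t f (iota n lam)| <= e / 3.
  rewrite (T_diff Tl) //; apply: (T_bound Tl Tp T1) => //; first exact: cont_sub.
  by move=> x; rewrite distrC.
have D2 := Hn lam.
rewrite (_ : iter (k n) (Top pd M n) (pi_n iota n f) lam - Tt t f (iota n lam) =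
  (iter (k n) (Top pd M n) (pi_n iota n f) lam - iter (k n) (Top pd M n) (pi_n iota n (fk N)) lam)
  + (iter (k n) (Top pd M n) (pi_n iota n (fk N)) lam - Tt t (fk N) (iota n lam))
  + (Tt t (fk N) (iota n lam) - Tt t f (iota n lam))); last by ring.
apply: le_lt_trans (ler_normD _ _) _.
have := ler_normD (iter (k n) (Top pd M n) (pi_n iota n f) lam - iter (k n) (Top pd M n) (pi_n iota n (fk N)) lam)
  (iter (k n) (Top pd M n) (pi_n iota n (fk N)) lam - Tt t (fk N) (iota n lam)).
lra.
Qed.

Lemma trunc_eps x n : 0 <= x ->
  (Num.truncn (x / eps n))%:R * eps n <= x /\ x < (Num.truncn (x / eps n))%:R * eps n + eps n.
Proof.
move=> x0; have e0 := eps_gt0 n.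
have xe : 0 <= x / eps n by apply: divr_ge0 => //; apply: ltW.
have H1 : (Num.truncn (x / eps n))%:R <= x / eps n by rewrite truncn_le.
have H2 := truncnS_gt (x / eps n).
split; first by rewrite -ler_pdivlMr.
have : x / eps n < (Num.truncn (x / eps n))%:R + 1 by rewrite -natr1 in H2.
by rewrite ltr_pdivrMr // mulrDl mul1r.
Qed.

Lemma fdd_main ts : forall fs p, size ts = size fs -> 0 <= p -> path <=%R p ts ->
  (forall i, (i < size fs)%N -> continuous (nth (fun _ => 0) fs i)) ->
  continuous (semi_fdd Tt p (zip ts fs)) /\
  forall e, 0 < e -> \forall n \near \oo, forall lam : L n,
    `|chain_fdd pd M iota n (Num.truncn (p / eps n))
        (zip [seq Num.truncn (t / eps n) | t <- ts] fs) lam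
      - semi_fdd Tt p (zip ts fs) (iota n lam)| < e.
Proof.
elim: ts => [|t ts IH] [|f fs] p //= Hs p0 Hpath Hc.
  split; first exact: cont_cst.
  by move=> e e0; apply: nearW => n lam; rewrite subrr normr0.
move: Hs => [Hs]; move: Hpath => /andP [pt Hpath].
have cf : continuous f := Hc 0%N isT.
have Hc' : forall i, (i < size fs)%N -> continuous (nth (fun _ => 0) fs i).
  by move=> i Hi; apply: (Hc i.+1).
have t0 : 0 <= t by apply: le_trans pt.
have [cs' Hap] := IH fs t Hs t0 Hpath Hc'.
set S := semi_fdd Tt t (zip ts fs) in cs' Hap *.
have cG : continuous (fun x => f x * S x) := cont_mul _ _ cf cs'.
have tp0 : 0 <= t - p by rewrite subr_ge0.
split; first exact: Tc _ _ tp0 cG.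
move=> e e0.
have [Bf [Bf0 HBf]] := @cont_bounded R Lb f cpt cf.
have e2 : 0 < e / 2 by lra.
have Bf1 : 0 < 2 * (Bf + 1) by lra.
have e2' : 0 < e / (2 * (Bf + 1)) by apply: divr_gt0.
pose kk n := (Num.truncn (t / eps n) - Num.truncn (p / eps n))%N.
have Hk : forall n, `|(kk n)%:R * eps n - (t - p)| <= 2 * eps n.
  move=> n; have e0n := eps_gt0 n.
  have [a1 a2] := trunc_eps t n t0; have [b1 b2] := trunc_eps p n p0.
  have le : (Num.truncn (p / eps n) <= Num.truncn (t / eps n))%N.
    by apply: le_truncn; apply: ler_wpM2r => //; rewrite invr_ge0 ltW.
  rewrite /kk natrB // mulrBl ler_norml; apply/andP; split; lra.
have HML := ML_gen _ cG _ tp0 _ Hk _ e2.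
apply: filterS2 (Hap _ e2') HML => n H1 H2 lam.
have D1 : `|iter (kk n) (Top pd M n)
      (fun l => f (iota n l) * chain_fdd pd M iota n (Num.truncn (t / eps n))
        (zip [seq Num.truncn (t0 / eps n) | t0 <- ts] fs) l) lam
   - iter (kk n) (Top pd M n) (pi_n iota n (fun x => f x * S x)) lam| <= e / 2.
  rewrite iter_diff; apply: (iter_bound pd_ge0 pd_sum1 M_gt0 M_coh) => l.
  rewrite /pi_n -mulrBr normrM.
  apply: le_trans (_ : Bf * (e / (2 * (Bf + 1))) <= _).
    by apply: ler_pM => //; [apply: ltW; apply: H1].
  rewrite mulrA ler_pdivrMr //; nra.
have D2 := H2 lam.
move: D1 D2; set X := iter _ _ _ lam; set Y := iter _ _ _ lam; set Z := Tt _ _ _.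
move=> D1 D2; have := ler_normD (X - Y) (Y - Z).
rewrite (_ : X - Y + (Y - Z) = X - Z); last by ring.
lra.
Qed.

Variable (P : probability (g_sigma_algebraType (@open Lb)) R).
Hypothesis Hweak : forall f : Lb -> R, continuous f ->
     (fun n => \sum_(lam : L n) M n lam * f (iota n lam)) @ \oo
       --> Rintegral P setT f.
Hypothesis M_sum1 : forall n, \sum_(lam : L n) M n lam = 1.

Lemma final_conv (ts : seq R) (fs : seq (Lb -> R)) :
    size ts = size fs ->
    all (fun t => 0 <= t) ts -> sorted <%R ts ->
    (forall i, (i < size fs)%N -> continuous (nth (fun _ => 0) fs i)) ->
    (fun n => \sum_(lam : L n) M n lam *
        chain_fdd pd M iota n 0 (zip [seq Num.truncn (t / eps n) | t <- ts] fs) lam)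
      @ \oo --> Rintegral P setT (semi_fdd Tt 0 (zip ts fs)).
Proof.
move=> Hs Hall Hsort Hc.
have Hpath : path <=%R 0 ts.
  case: ts Hall Hsort {Hs} => //= t ts' /andP [t0 _] Hs; rewrite t0 /=.
  by apply: sub_path Hs => x y /ltW.
have [cS Hap] := fdd_main _ _ _ Hs (lexx 0) Hpath Hc.
apply/cvgrPdist_lt => e e0.
have e2 : 0 < e / 2 by lra.
have W := (cvgrPdist_lt _ _).1 (Hweak _ cS) _ e2.
have {}W := W eventually_filter.
apply: filterS2 W (Hap _ e2) => n H1 H2.
move: H2; rewrite mul0r truncn0 => H2.
set S := semi_fdd Tt 0 (zip ts fs) in H1 H2 *.
set I := Rintegral P setT S in H1 *.
set ch := chain_fdd pd M iota n 0 _ in H2 *.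
have D : `|\sum_lam M n lam * S (iota n lam) - \sum_lam M n lam * ch lam| <= e / 2.
  rewrite -sumrB; apply: le_trans (ler_norm_sum _ _ _) _.
  apply: le_trans (_ : \sum_lam M n lam * (e / 2) <= _).
    apply: ler_sum => lam _; rewrite -mulrBr normrM ger0_norm; last exact: ltW.
    by apply: ler_wpM2l; [apply: ltW | rewrite distrC; apply: ltW].
  by rewrite -mulr_suml M_sum1 mul1r.
have := ler_normD (I - \sum_lam M n lam * S (iota n lam))
  (\sum_lam M n lam * S (iota n lam) - \sum_lam M n lam * ch lam).
rewrite (_ : I - _ + (_ - _) = I - \sum_lam M n lam * ch lam); last by ring.
lra.
Qed.
End ML.


Theorem proposition1p8 (R : realType) (L : nat -> finType)
  (pd : forall n, L n.+1 -> L n -> R) (M : forall n, L n -> R)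
  (Lb : pseudoPMetricType R) (iota : forall n, L n -> Lb)
  (Fm : nat -> set (Lb -> R)) (eps : nat -> R)
  (A : (Lb -> R) -> (Lb -> R)) (Tt : R -> (Lb -> R) -> (Lb -> R))
  (P : probability (g_sigma_algebraType (@open Lb)) R) :
  (* the graded set and the down-kernel *)
  #|L 0| = 1%N ->
  (forall n (nu : L n.+1) (mu : L n), 0 <= pd n nu mu) ->
  (forall n (nu : L n.+1), \sum_(mu : L n) pd n nu mu = 1) ->
  (* the coherent system, positive everywhere *)
  (forall n (lam : L n), 0 < M n lam) ->
  (forall n, \sum_(lam : L n) M n lam = 1) ->
  (forall n (mu : L n), \sum_(lam : L n.+1) M n.+1 lam * pd n lam mu = M n mu) ->
  (* the embeddings *)
  (forall n, injective (iota n)) ->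
  (* (A1) *)
  hausdorff_space Lb -> compact [set: Lb] ->
  (exists D : set Lb, countable D /\ dense D) ->
  (* (A2) *)
  (forall O : set Lb, open O -> O !=set0 ->
     \forall n \near \oo, exists lam : L n, O (iota n lam)) ->
  (* (A3): F = \bigcup_m F^m, ascending finite-dim subspaces, dense in C(Lb) *)
  (forall m, fin_dim_subspace (Fm m)) ->
  (forall m, Fm m `<=` Fm m.+1) ->
  (forall f : Lb -> R, continuous f ->
     exists fk : nat -> Lb -> R,
       (forall k, (\bigcup_m Fm m) (fk k)) /\ ucvg \oo fk f) ->
  (forall m, \forall n \near \oo,
     (forall f g, Fm m f -> Fm m g -> pi_n iota n f = pi_n iota n g -> f = g) /\
     (forall f, Fm m f ->
        exists g, Fm m g /\ pi_n iota n g = Top pd M n (pi_n iota n f))) ->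
  (* (A4) *)
  (forall n, 0 < eps n) -> eps @ \oo --> 0 ->
  (forall m f, Fm m f ->
     Fm m (A f) /\
     forall g : nat -> Lb -> R,
       (\forall n \near \oo, Fm m (g n) /\
          pi_n iota n (g n) =
            (fun lam => (Top pd M n (pi_n iota n f) lam - pi_n iota n f lam)
                        / eps n)) ->
       ucvg \oo g (A f)) ->
  (* (A5) *)
  (\bigcup_m Fm m) (fun _ => 1) ->
  (* the closure of A generates the conservative Markov semigroup T(t) *)
  markov_semigroup Tt -> generated_by_closure Tt (\bigcup_m Fm m) A ->
  (* iota_n(M_n) converges weakly to P *)
  (forall f : Lb -> R, continuous f ->
     (fun n => \sum_(lam : L n) M n lam * f (iota n lam)) @ \oo
       --> Rintegral P setT f) ->
  (* convergence of finite-dimensional distributions *)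
  forall (ts : seq R) (fs : seq (Lb -> R)),
    size ts = size fs ->
    all (fun t => 0 <= t) ts -> sorted <%R ts ->
    (forall i, (i < size fs)%N -> continuous (nth (fun _ => 0) fs i)) ->
    (fun n => \sum_(lam : L n) M n lam *
        chain_fdd pd M iota n 0 (zip [seq Num.truncn (t / eps n) | t <- ts] fs) lam)
      @ \oo --> Rintegral P setT (semi_fdd Tt 0 (zip ts fs)).
Proof.
move=> HL0 pd_ge0 pd_sum1 M_gt0 M_sum1 M_coh inj haus cpt sep A2 HFm Hasc Hdense HA3
  eps_gt0 eps_cvg HA4 HA5 Hmarkov Hgen Hweak ts fs Hs Hall Hsort Hc.
case: Hmarkov => [Tc [Tl [T0 [Ts [Tp [T1 Tsc]]]]]].
have HA3' : forall m, \forall n \near \oo, forall f, Fm m f ->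
    exists g, Fm m g /\ pi_n iota n g = Top pd M n (pi_n iota n f).
  by move=> m; apply: filterS (HA3 m) => n [].
exact: (final_conv R L pd M Lb iota Fm eps A Tt pd_ge0 pd_sum1 M_gt0 M_coh Tc Tl T0 Ts Tp T1
  cpt HFm HA3' eps_gt0 eps_cvg HA4 Hgen Hdense P Hweak M_sum1 ts fs Hs Hall Hsort Hc).
Qed.
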